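(* Let $0<\bar C\le1$, $\epsilon>0$, $\omega\ge0$, $\gamma_0\ge\gamma\ge0$. Let $\omega(t),\epsilon_x(t),\epsilon_y(t),\delta\gamma_t$ be real-valued functions of time with $|\omega(t)|\le\omega$, $\sqrt{\epsilon_x^2(t)+\epsilon_y^2(t)}\le\epsilon$, $|\delta\gamma_t|\le\gamma$, and set $H(t)=[1+\omega(t)]I_z+\epsilon_x(t)I_x+\epsilon_y(t)I_y$, $\gamma_t=\gamma_0+\delta\gamma_t$. Let the qubit density matrix $\rho_t$ evolve according to $$\dot\rho_t=-i[H(t),\rho_t]+\gamma_t(\sigma_z\rho_t\sigma_z-\rho_t)$$ from an initial state $\rho_0$ with $C_0=[\mathrm{tr}(\rho_0\sigma_x)]^2+[\mathrm{tr}(\rho_0\sigma_y)]^2=1$. Define $$T_p=\begin{cases}\dfrac{1-\bar C}{4\sqrt2(\gamma_0+\gamma)}, & \text{if } 4(\gamma_0+\gamma)^2\ge\epsilon^2,\\[2mm] \dfrac{(1-\bar C)\sqrt{\epsilon^2-2(\gamma_0+\gamma)^2}}{2\epsilon^2}, & \text{if } 4(\gamma_0+\gamma)^2<\epsilon^2.\end{cases}$$ Then for every $t\in[0,T_p]$, $\rho_t\in\mathcal{D}_p=\{\rho:[\mathrm{tr}(\rho\sigma_x)]^2+[\mathrm{tr}(\rho\sigma_y)]^2\ge\bar C\}$. Consequently, if projective measurements of $\sigma_x$ are performed periodically with period $T_p$, the state remains in $\mathcal{D}_p$.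
   Context: $\sigma_x,\sigma_y,\sigma_z$ are the Pauli matrices $\begin{pmatrix}0&1\\1&0\end{pmatrix},\begin{pmatrix}0&-i\\i&0\end{pmatrix},\begin{pmatrix}1&0\\0&-1\end{pmatrix}$, $I_j=\frac12\sigma_j$, $[A,B]=AB-BA$, units with $\hbar=1$. The coherence of a qubit state $\rho$ is $C=x^2+y^2$ with $x=\mathrm{tr}(\rho\sigma_x)$, $y=\mathrm{tr}(\rho\sigma_y)$. *)

(* Defs.v *)
From Stdlib Require Import Reals.
From Coquelicot Require Import Coquelicot.
Open Scope R_scope.

(* 2x2 complex matrices; index false = first basis vector |0>,
   true = second basis vector |1> (sigma_z |0> = |0>). *)
Definition M2 := bool -> bool -> C.

Definition mmul (A B : M2) : M2 :=
  fun i j => Cplus (Cmult (A i false) (B false j)) (Cmult (A i true) (B true j)).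
Definition madd (A B : M2) : M2 := fun i j => Cplus (A i j) (B i j).
Definition msub (A B : M2) : M2 := fun i j => Cminus (A i j) (B i j).
Definition mscal (c : C) (A : M2) : M2 := fun i j => Cmult c (A i j).
Definition mtr (A : M2) : C := Cplus (A false false) (A true true).
Definition comm (A B : M2) : M2 := msub (mmul A B) (mmul B A).

Definition Ci : C := (0, 1).

Definition sigma_x : M2 := fun i j => if Bool.eqb i j then RtoC 0 else RtoC 1.
Definition sigma_y : M2 := fun i j =>
  match i, j with
  | false, true => Copp Ci
  | true, false => Ci
  | _, _ => RtoC 0
  end.
Definition sigma_z : M2 := fun i j =>
  match i, j with
  | false, false => RtoC 1
  | true, true => RtoC (-1)
  | _, _ => RtoC 0
  end.

Definition Ix : M2 := mscal (RtoC (1/2)) sigma_x.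
Definition Iy : M2 := mscal (RtoC (1/2)) sigma_y.
Definition Iz : M2 := mscal (RtoC (1/2)) sigma_z.

(* Bloch coordinates x = tr(rho sigma_x), y = tr(rho sigma_y)
   (real for Hermitian rho; we take the real part). *)
Definition bx (rho : M2) : R := Re (mtr (mmul rho sigma_x)).
Definition by_ (rho : M2) : R := Re (mtr (mmul rho sigma_y)).

Definition coherence (rho : M2) : R := (bx rho)^2 + (by_ rho)^2.

Definition is_density (rho : M2) : Prop :=
  (forall i j, rho j i = Cconj (rho i j)) /\
  (forall v : bool -> C,
      0 <= Re (Cplus
                (Cplus (Cmult (Cconj (v false)) (Cmult (rho false false) (v false)))
                       (Cmult (Cconj (v false)) (Cmult (rho false true) (v true))))
                (Cplus (Cmult (Cconj (v true)) (Cmult (rho true false) (v false)))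
                       (Cmult (Cconj (v true)) (Cmult (rho true true) (v true)))))) /\
  mtr rho = RtoC 1.

Definition in_Dp (Cbar : R) (rho : M2) : Prop := Cbar <= coherence rho.

Definition Ham (w ex ey : R -> R) (t : R) : M2 :=
  madd (madd (mscal (RtoC (1 + w t)) Iz) (mscal (RtoC (ex t)) Ix))
       (mscal (RtoC (ey t)) Iy).

Definition lindblad_rhs (H : M2) (g : R) (rho : M2) : M2 :=
  madd (mscal (Copp Ci) (comm H rho))
       (mscal (RtoC g) (msub (mmul (mmul sigma_z rho) sigma_z) rho)).

Definition Tp (Cbar eps g0 g : R) : R :=
  if Rle_dec (eps ^ 2) (4 * (g0 + g) ^ 2)
  then (1 - Cbar) / (4 * sqrt 2 * (g0 + g))
  else (1 - Cbar) * sqrt (eps ^ 2 - 2 * (g0 + g) ^ 2) / (2 * eps ^ 2).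

(* Main.v *)
Require Import Defs.
From Stdlib Require Import Reals Lra Psatz.
From Coquelicot Require Import Coquelicot.
Open Scope R_scope.

Definition rc (f:R->R) := filterlim f (at_right 0) (locally (f 0)).
Lemma rc_plus f g : rc f -> rc g -> rc (fun s => f s + g s).
Proof. intros Hf Hg. unfold rc in *.
  apply (filterlim_comp_2 f g Rplus Hf Hg).
  apply (filterlim_plus (K:=R_AbsRing) (V:=R_NormedModule) (f 0) (g 0)). Qed.
Lemma rc_minus f g : rc f -> rc g -> rc (fun s => f s - g s).
Proof. intros Hf Hg. unfold rc in *.
  apply (filterlim_comp_2 (H:=locally (- g 0)) f (fun s => - g s) Rplus Hf).
  eapply filterlim_comp. exact Hg. apply (filterlim_opp (K:=R_AbsRing) (V:=R_NormedModule) (g 0)).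
  apply (filterlim_plus (K:=R_AbsRing) (V:=R_NormedModule) (f 0) (- g 0)). Qed.
Lemma rc_opp f : rc f -> rc (fun s => - f s).
Proof. intros Hf. unfold rc in *. eapply filterlim_comp. exact Hf.
  apply (filterlim_opp (K:=R_AbsRing) (V:=R_NormedModule) (f 0)). Qed.
Lemma rc_mult f g : rc f -> rc g -> rc (fun s => f s * g s).
Proof. intros Hf Hg. unfold rc in *.
  apply (filterlim_comp_2 f g Rmult Hf Hg).
  apply (filterlim_mult (K:=R_AbsRing) (f 0) (g 0)). Qed.
Lemma rc_fst (f:R->C) : filterlim f (at_right 0) (locally (f 0)) -> rc (fun s => fst (f s)).
Proof. intros H. unfold rc. eapply filterlim_comp. exact H.
  apply (linear_cont (K:=R_AbsRing) (U:=C_R_NormedModule) (V:=R_NormedModule) (fun z:C => fst z)).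
  apply (is_linear_fst (U:=R_NormedModule) (V:=R_NormedModule)). Qed.
Lemma rc_snd (f:R->C) : filterlim f (at_right 0) (locally (f 0)) -> rc (fun s => snd (f s)).
Proof. intros H. unfold rc. eapply filterlim_comp. exact H.
  apply (linear_cont (K:=R_AbsRing) (U:=C_R_NormedModule) (V:=R_NormedModule) (fun z:C => snd z)).
  apply (is_linear_snd (U:=R_NormedModule) (V:=R_NormedModule)). Qed.
Lemma lb (f df : R -> R) M : 0 <= M -> (forall s, 0<s -> is_derive f s (df s)) ->
  (forall s, 0<s -> -M <= df s) -> rc f -> forall t, 0 <= t -> f 0 - M*t <= f t.
Proof.
  intros HM Hd Hdf Hc t Ht.
  destruct (Req_dec t 0) as [->|Ht0]. lra.
  assert (Htp : 0 < t) by lra.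
  destruct (Rle_dec (f 0 - M*t) (f t)) as [Hok|Hno]. exact Hok.
  exfalso. set (e := f 0 - M*t - f t).
  assert (He : 0 < e/2) by (unfold e; lra).
  unfold rc in Hc. pose proof (proj1 (filterlim_locally (F:=at_right 0) f (f 0)) Hc) as Hc3. clear Hc. rename Hc3 into Hc.
  specialize (Hc (mkposreal _ He)). simpl in Hc.
  unfold at_right, within, locally in Hc. destruct Hc as [d Hdd].
  set (y := Rmin (d/2) (t/2)).
  assert (Hy0 : 0 < y). { unfold y. apply Rmin_pos. destruct d; simpl; lra. lra. }
  assert (Hyd : y <= d/2) by apply Rmin_l.
  assert (Hyt : y <= t/2) by apply Rmin_r.
  assert (Hb := Hdd y).
  assert (Hball : ball 0 d y).
  { unfold ball; simpl. unfold AbsRing_ball, abs, minus, plus, opp; simpl.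
    rewrite Rabs_pos_eq; destruct d; simpl in *; lra. }
  specialize (Hb Hball Hy0).
  unfold ball in Hb; simpl in Hb. unfold AbsRing_ball, abs, minus, plus, opp in Hb; simpl in Hb.
  apply Rabs_lt_between in Hb.
  destruct (MVT_gen f y t df) as [c [Hc1 Hc2]].
  - intros x Hx. rewrite Rmin_left in Hx by lra. rewrite Rmax_right in Hx by lra. apply Hd. lra.
  - intros x Hx. rewrite Rmin_left in Hx by lra. rewrite Rmax_right in Hx by lra.
    apply continuity_pt_filterlim. apply (ex_derive_continuous (K:=R_AbsRing) (V:=R_NormedModule)).
    exists (df x). apply Hd. lra.
  - rewrite Rmin_left in Hc1 by lra. rewrite Rmax_right in Hc1 by lra.
    assert (Hdc : -M <= df c) by (apply Hdf; lra).
    assert (-M*(t-y) <= df c * (t - y)) by (apply Rmult_le_compat_r; lra).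
    unfold e in *. nra.
Qed.
Definition X (r:M2) := fst (r false true) + fst (r true false).
Definition Y (r:M2) := snd (r true false) - snd (r false true).
Definition Z (r:M2) := fst (r false false) - fst (r true true).
Lemma dens r : is_density r -> X r * X r + Y r * Y r + Z r * Z r <= 1.
Proof.
  intros [Hh [Hq Htr]].
  pose proof (Hh false false) as H1. pose proof (Hh true true) as H2. pose proof (Hh false true) as H3.
  pose proof (Hq (fun i => if i then r false false else Copp (r false true))) as Q1.
  pose proof (Hq (fun i => if i then Copp (r true false) else r true true)) as Q2.
  simpl in Q1, Q2. unfold X, Y, Z, mtr in *.
  rewrite H3 in Q1, Q2 |- *.
  destruct (r false false) as [a1 a2], (r false true) as [b1 b2], (r true true) as [d1 d2].
  unfold Cconj in *. simpl in *.
  apply (f_equal snd) in H1. apply (f_equal snd) in H2. apply (f_equal fst) in Htr.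
  unfold Cplus in Htr. simpl in H1, H2, Htr.
  assert (a2 = 0) by lra. assert (d2 = 0) by lra. subst a2 d2.
  assert (Ha: a1 * (a1*d1 - b1*b1 - b2*b2) >= 0) by nra.
  assert (Hd: d1 * (a1*d1 - b1*b1 - b2*b2) >= 0) by nra.
  nra.
Qed.
Lemma keyb (p q k gm G eps : R): 0<=p -> 0<=q -> p*p+q*q<=1 -> 0<=k -> k <= eps*q ->
  0<=gm -> gm<=G -> 0<=eps -> 2*p*k + 4*gm*q*q <= 2*G + sqrt (eps*eps+4*G*G).
Proof.
  intros. set (S := sqrt (eps*eps+4*G*G)).
  assert (HS : S*S = eps*eps+4*G*G) by (apply sqrt_sqrt; nra).
  assert (HS0 : 0 <= S) by apply sqrt_pos.
  assert (HA : (2*eps*p*q + 2*G*(q*q-p*p)) <= S*(p*p+q*q)).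
  { assert (Hsq : (2*eps*p*q + 2*G*(q*q-p*p))^2 <= (S*(p*p+q*q))^2).
    { replace ((S*(p*p+q*q))^2) with ((eps*eps+4*G*G)*((2*p*q)^2+(q*q-p*p)^2)) by (rewrite <- HS; ring).
      pose proof (pow2_ge_0 (eps*(q*q-p*p) - 2*G*(2*p*q))). nra. }
    assert (0 <= S*(p*p+q*q)) by nra. nra. }
  assert (2*p*k <= 2*eps*p*q) by nra.
  assert (4*gm*q*q <= 4*G*q*q) by nra.
  assert (S*(p*p+q*q) <= S) by nra.
  assert (2*G*(p*p+q*q) <= 2*G) by nra.
  nra.
Qed.
Lemma dC_lb X Y Z e1 e2 gm G eps : X*X+Y*Y+Z*Z <= 1 -> sqrt (e1^2+e2^2) <= eps ->
  0 <= gm -> gm <= G -> 0 <= eps ->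
  -(2*G + sqrt (eps*eps+4*G*G)) <= 2*Z*(e2*X - e1*Y) - 4*gm*(X*X+Y*Y).
Proof.
  intros H1 H2 H3 H4 H5.
  set (q := sqrt (X*X+Y*Y)).
  assert (Hq : q*q = X*X+Y*Y) by (apply sqrt_sqrt; nra).
  assert (Hq0 : 0 <= q) by apply sqrt_pos.
  assert (He : e1^2+e2^2 <= eps*eps).
  { pose proof (sqrt_pos (e1^2+e2^2)). rewrite <- (sqrt_sqrt (e1^2+e2^2)) by nra. nra. }
  set (K := e2*X - e1*Y).
  assert (HK : K*K <= (eps*q)*(eps*q)).
  { unfold K. replace ((eps*q)*(eps*q)) with (eps*eps*(X*X+Y*Y)) by (rewrite <- Hq; ring).
    assert ((e2*X - e1*Y)*(e2*X-e1*Y) <= (e1^2+e2^2)*(X*X+Y*Y)) by (pose proof (pow2_ge_0 (e1*X+e2*Y)); nra).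
    assert ((e1^2+e2^2)*(X*X+Y*Y) <= eps*eps*(X*X+Y*Y)) by (apply Rmult_le_compat_r; nra).
    lra. }
  assert (HKa : Rabs K <= eps*q).
  { assert (0 <= eps*q) by nra. destruct (Rcase_abs K); [rewrite Rabs_left | rewrite Rabs_right]; nra. }
  pose proof (keyb (Rabs Z) q (Rabs K) gm G eps (Rabs_pos Z) Hq0) as Hk.
  assert (Rabs Z * Rabs Z = Z*Z) by (rewrite <- Rabs_mult; apply Rabs_pos_eq; nra).
  assert (2*Z*K >= - (2*(Rabs Z*Rabs K))).
  { rewrite <- Rabs_mult. pose proof (Rle_abs (-(Z*K))); rewrite Rabs_Ropp in *; idtac. lra. }
  specialize (Hk ltac:(nra) (Rabs_pos K) HKa H3 H4 H5).
  rewrite <- Hq. fold K. nra.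
Qed.
Lemma tpb Cbar eps g0 g : Cbar <= 1 -> 0 < eps -> 0 <= g0 + g ->
  (2*(g0+g) + sqrt (eps*eps+4*(g0+g)*(g0+g))) * Tp Cbar eps g0 g <= 1 - Cbar.
Proof.
  intros HC He HG. unfold Tp. set (G := g0+g) in *.
  set (S := sqrt (eps*eps+4*G*G)).
  assert (HS : S*S = eps*eps+4*G*G) by (apply sqrt_sqrt; nra).
  assert (HS0 : 0 <= S) by apply sqrt_pos.
  destruct (Rle_dec (eps^2) (4*G^2)) as [H1|H1].
  - assert (HGp : 0 < G) by nra.
    set (r2 := sqrt 2).
    assert (Hr : r2*r2 = 2) by (apply sqrt_sqrt; lra).
    assert (Hr0 : 0 <= r2) by apply sqrt_pos.
    assert (Hr1 : 1 <= r2) by nra.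
    assert (HSb : S <= 2*r2*G).
    { assert (S*S <= (2*r2*G)*(2*r2*G)).
      { replace ((2*r2*G)*(2*r2*G)) with (4*(r2*r2)*G*G) by ring. rewrite Hr. simpl in H1. nra. }
      assert (0 <= 2*r2*G) by nra. nra. }
    assert (Hd : 0 < 4*r2*G) by nra.
    replace ((2*G+S)*((1-Cbar)/(4*r2*G))) with ((1-Cbar)*((2*G+S)/(4*r2*G))) by (field; lra).
    rewrite <- (Rmult_1_r (1-Cbar)) at 2. apply Rmult_le_compat_l. lra.
    apply (Rmult_le_reg_r (4*r2*G)). lra. unfold Rdiv. rewrite Rmult_assoc, Rinv_l by lra. nra.
  - set (Q := sqrt (eps^2 - 2*G^2)).
    assert (HQ : Q*Q = eps^2 - 2*G^2) by (apply sqrt_sqrt; nra).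
    assert (HQ0 : 0 <= Q) by apply sqrt_pos.
    assert (Hk : (2*G+S)*Q <= 2*eps^2).
    { assert (2*G*Q <= 2*G*G + Q*Q/2) by (pose proof (pow2_ge_0 (2*G - Q)); nra).
      assert (S*Q <= S*S/4 + Q*Q) by (pose proof (pow2_ge_0 (S - 2*Q)); nra).
      nra. }
    assert (Hd : 0 < 2*eps^2) by nra.
    replace ((2*G+S)*((1-Cbar)*Q/(2*eps^2))) with ((1-Cbar)*((2*G+S)*Q/(2*eps^2))) by (field; lra).
    rewrite <- (Rmult_1_r (1-Cbar)) at 2. apply Rmult_le_compat_l. lra.
    apply (Rmult_le_reg_r (2*eps^2)). lra. unfold Rdiv. rewrite Rmult_assoc, Rinv_l by lra. nra.
Qed.
Lemma der_fst (f:R->C) t v : is_derive f t v -> is_derive (fun s => fst (f s)) t (fst v).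
Proof. intros H. unfold is_derive in *.
 apply (filterdiff_comp' f (fun z : C => fst z) t _ (fun z:C => fst z)) in H.
 exact H. apply filterdiff_linear. apply (is_linear_fst (U:=R_NormedModule) (V:=R_NormedModule)). Qed.
Lemma der_snd (f:R->C) t v : is_derive f t v -> is_derive (fun s => snd (f s)) t (snd v).
Proof. intros H. unfold is_derive in *.
 apply (filterdiff_comp' f (fun z : C => snd z) t _ (fun z:C => snd z)) in H.
 exact H. apply filterdiff_linear. apply (is_linear_snd (U:=R_NormedModule) (V:=R_NormedModule)). Qed.
Lemma bloch (w ex ey : R -> R) t g (r:M2) :
  let Hm := Ham w ex ey t in
  fst (lindblad_rhs Hm g r false true) + fst (lindblad_rhs Hm g r true false)
   = ey t * Z r - (1+w t) * Y r - 2*g*X r /\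
  snd (lindblad_rhs Hm g r true false) - snd (lindblad_rhs Hm g r false true)
   = (1+w t) * X r - ex t * Z r - 2*g*Y r /\
  fst (lindblad_rhs Hm g r false false) - fst (lindblad_rhs Hm g r true true)
   = ex t * Y r - ey t * X r.
Proof.
  unfold X, Y, Z, lindblad_rhs, Ham, comm, madd, msub, mmul, mscal, Ix, Iy, Iz, sigma_x, sigma_y, sigma_z, Ci.
  destruct (r false false) as [a1 a2], (r false true) as [b1 b2], (r true false) as [c1 c2], (r true true) as [d1 d2].
  simpl. repeat split; field.
Qed.
Lemma bx_eq r : bx r = X r. Proof. unfold bx, X, mtr, mmul, sigma_x. destruct (r false false) as [a1 a2], (r false true) as [b1 b2], (r true false) as [c1 c2], (r true true) as [d1 d2]. simpl. ring. Qed.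
Lemma by_eq r : by_ r = Y r. Proof. unfold by_, Y, mtr, mmul, sigma_y, Ci. destruct (r false false) as [a1 a2], (r false true) as [b1 b2], (r true false) as [c1 c2], (r true true) as [d1 d2]. simpl. ring. Qed.
Lemma is_derive_eq (f:R->R) x l l' : is_derive f x l -> l = l' -> is_derive f x l'.
Proof. intros H ->. exact H. Qed.

Theorem theorem4
  (Cbar eps om g0 g : R)
  (w ex ey dg : R -> R) (rho : R -> M2)
  (HC0 : 0 < Cbar) (HC1 : Cbar <= 1) (Heps : 0 < eps) (Hom : 0 <= om)
  (Hg : 0 <= g) (Hgg0 : g <= g0)
  (Hw : forall t, 0 <= t -> Rabs (w t) <= om)
  (He : forall t, 0 <= t -> sqrt ((ex t) ^ 2 + (ey t) ^ 2) <= eps)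
  (Hdg : forall t, 0 <= t -> Rabs (dg t) <= g)
  (Hode : forall t, 0 < t -> forall i j,
      is_derive (fun s => rho s i j) t
        (lindblad_rhs (Ham w ex ey t) (g0 + dg t) (rho t) i j))
  (Hcont0 : forall i j,
      filterlim (fun s => rho s i j) (at_right 0) (locally (rho 0 i j)))
  (Hrho0 : is_density (rho 0))
  (HCoh0 : coherence (rho 0) = 1) :
  forall t, 0 <= t <= Tp Cbar eps g0 g -> in_Dp Cbar (rho t).
Proof.
  intros t Ht.
  set (xf := fun s => X (rho s)). set (yf := fun s => Y (rho s)). set (zf := fun s => Z (rho s)).
  set (gm := fun s => g0 + dg s).
  assert (Dx : forall s, 0 < s -> is_derive xf s (ey s * zf s - (1 + w s) * yf s - 2 * gm s * xf s)).
  { intros s Hs. destruct (bloch w ex ey s (g0 + dg s) (rho s)) as [E _].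
    unfold xf, zf, yf, gm. rewrite <- E. unfold X.
    apply (is_derive_plus (K:=R_AbsRing) (V:=R_NormedModule)); apply der_fst; apply Hode; exact Hs. }
  assert (Dy : forall s, 0 < s -> is_derive yf s ((1 + w s) * xf s - ex s * zf s - 2 * gm s * yf s)).
  { intros s Hs. destruct (bloch w ex ey s (g0 + dg s) (rho s)) as [_ [E _]].
    unfold xf, zf, yf, gm. rewrite <- E. unfold Y.
    apply (is_derive_minus (K:=R_AbsRing) (V:=R_NormedModule)); apply der_snd; apply Hode; exact Hs. }
  assert (Dz : forall s, 0 < s -> is_derive zf s (ex s * yf s - ey s * xf s)).
  { intros s Hs. destruct (bloch w ex ey s (g0 + dg s) (rho s)) as [_ [_ E]].
    unfold xf, zf, yf, gm. rewrite <- E. unfold Z.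
    apply (is_derive_minus (K:=R_AbsRing) (V:=R_NormedModule)); apply der_fst; apply Hode; exact Hs. }
  set (Cf := fun s => xf s * xf s + yf s * yf s).
  set (R2 := fun s => - (Cf s + zf s * zf s)).
  assert (DC : forall s, 0 < s -> is_derive Cf s
     (2 * zf s * (ey s * xf s - ex s * yf s) - 4 * gm s * (xf s * xf s + yf s * yf s))).
  { intros s Hs. eapply is_derive_eq.
    apply (is_derive_plus (K:=R_AbsRing) (V:=R_NormedModule));
      apply (is_derive_mult (K:=R_AbsRing)); try apply Dx; try apply Dy; try exact Hs; apply Rmult_comm.
    unfold plus, mult; simpl. ring. }
  assert (DR : forall s, 0 < s -> is_derive R2 s (4 * gm s * (xf s * xf s + yf s * yf s))).
  { intros s Hs. eapply is_derive_eq.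
    apply (is_derive_opp (K:=R_AbsRing) (V:=R_NormedModule)).
    apply (is_derive_plus (K:=R_AbsRing) (V:=R_NormedModule)). apply DC. exact Hs.
      apply (is_derive_mult (K:=R_AbsRing)); try apply Dz; try exact Hs; apply Rmult_comm.
    unfold plus, mult, opp; simpl. ring. }
  assert (rcx : rc xf) by (apply rc_plus; apply rc_fst; apply Hcont0).
  assert (rcy : rc yf) by (apply rc_minus; apply rc_snd; apply Hcont0).
  assert (rcz : rc zf) by (apply rc_minus; apply rc_fst; apply Hcont0).
  assert (rcC : rc Cf) by (apply rc_plus; apply rc_mult; assumption).
  assert (rcR : rc R2).
  { unfold R2. apply rc_opp. apply rc_plus. exact rcC. apply rc_mult; assumption. }
  assert (Hgm : forall s, 0 <= s -> 0 <= gm s <= g0 + g).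
  { intros s Hs. specialize (Hdg s Hs). unfold gm. apply Rabs_le_between in Hdg. lra. }
  assert (HR0 : - R2 0 <= 1).
  { pose proof (dens (rho 0) Hrho0). unfold R2, Cf, xf, yf, zf. lra. }
  assert (HRs : forall s, 0 <= s -> - R2 s <= 1).
  { intros s Hs. pose proof (lb R2 _ 0 (Rle_refl 0) DR) as L.
    assert (L2 : R2 0 - 0 * s <= R2 s).
    { apply L; try assumption. intros u Hu. specialize (Hgm u ltac:(lra)).
      assert (0 <= xf u * xf u + yf u * yf u) by nra. nra. }
    lra. }
  set (G := g0 + g). set (M := 2*G + sqrt (eps*eps+4*G*G)).
  assert (HM : 0 <= M) by (unfold M, G; pose proof (sqrt_pos (eps*eps+4*(g0+g)*(g0+g))); lra).
  assert (HCt : Cf 0 - M * t <= Cf t).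
  { apply (lb Cf _ M HM DC); try assumption; try lra.
    intros s Hs. unfold M. apply dC_lb.
    - pose proof (HRs s ltac:(lra)). unfold R2, Cf in *. lra.
    - apply He; lra.
    - apply Hgm; lra.
    - apply Hgm; lra.
    - lra. }
  assert (HC00 : Cf 0 = 1).
  { unfold coherence in HCoh0. rewrite bx_eq, by_eq in HCoh0. unfold Cf, xf, yf. rewrite <- HCoh0. ring. }
  pose proof (tpb Cbar eps g0 g HC1 Heps ltac:(lra)) as HT. fold G M in HT.
  assert (M * t <= M * Tp Cbar eps g0 g) by (apply Rmult_le_compat_l; lra).
  unfold in_Dp, coherence. rewrite bx_eq, by_eq.
  rewrite HC00 in HCt. unfold Cf, xf, yf in HCt.
  assert (E2 : X (rho t) ^ 2 + Y (rho t) ^ 2 = X (rho t) * X (rho t) + Y (rho t) * Y (rho t)) by ring.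
  rewrite E2. clear - HCt HT H Ht. lra.
Qed.
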